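(* There do not exist three pairwise vertex-disjoint antipodal cycles of length $10$ in the graph $Q_2^5\setminus\{\overline{0},\overline{1}\}$, where $\overline{0}=(0,0,0,0,0)$ and $\overline{1}=(1,1,1,1,1)$.
   Context: $Q_2^5$ is the $5$-dimensional Boolean hypercube graph on $\{0,1\}^5$ (two vertices adjacent iff they differ in exactly one coordinate). An edge $\{x,y\}$ with $x,y$ differing in coordinate $i$ has direction $i$; two edges of the same direction $i$ are antipodal if the endpoints of one are obtained from the endpoints of the other by complementing all coordinates. A (simple) cycle in the hypercube is antipodal if every two of its edges having the same direction are antipodal. *)

(* Defs.v *)
From mathcomp Require Import all_boot.
Set Implicit Arguments. Unset Strict Implicit. Unset Printing Implicit Defensive.

Definition vert := {ffun 'I_5 -> bool}.

Definition adj (x y : vert) : bool := #|[set i | x i != y i]| == 1.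

Definition compl (x : vert) : vert := [ffun i => ~~ x i].

Definition zero_v : vert := [ffun => false].
Definition one_v : vert := [ffun => true].

Definition has_dir (x y : vert) (i : 'I_5) : bool := adj x y && (x i != y i).

Definition antipodal_edges (a b c d : vert) : Prop :=
  (c = compl a /\ d = compl b) \/ (c = compl b /\ d = compl a).

Definition simple_cycle (c : seq vert) : Prop :=
  2 < size c /\ uniq c /\ cycle adj c.

Definition edge_src (c : seq vert) (k : nat) : vert := nth zero_v c k.
Definition edge_tgt (c : seq vert) (k : nat) : vert :=
  nth zero_v c ((k.+1) %% size c).

Definition antipodal_cycle (c : seq vert) : Prop :=
  simple_cycle c /\
  forall (j k : nat) (i : 'I_5), j < size c -> k < size c -> j <> k ->
    has_dir (edge_src c j) (edge_tgt c j) i ->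
    has_dir (edge_src c k) (edge_tgt c k) i ->
    antipodal_edges (edge_src c j) (edge_tgt c j) (edge_src c k) (edge_tgt c k).

Definition avoids_01 (c : seq vert) : Prop :=
  zero_v \notin c /\ one_v \notin c.

Definition vdisjoint (c d : seq vert) : Prop := forall x, x \in c -> x \notin d.

(* Main.v *)
Require Import Defs.
From mathcomp Require Import all_boot zify.

Set Implicit Arguments. Unset Strict Implicit. Unset Printing Implicit Defensive.

Definition B5 := (bool * bool * bool * bool * bool)%type.

Definition proj (i : nat) (t : B5) : bool :=
  let: (a, b, c, d, e) := t in nth false [:: a; b; c; d; e] i.
Definition bneg (t : B5) : B5 :=
  let: (a, b, c, d, e) := t in (~~ a, ~~ b, ~~ c, ~~ d, ~~ e).
Definition code (t : B5) : nat :=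
  let: (a, b, c, d, e) := t in a + 2 * b + 4 * c + 8 * d + 16 * e.
Definition bz : B5 := (false, false, false, false, false).
Definition bo : B5 := (true, true, true, true, true).

Definition bools := [:: false; true].
Definition allB5 : seq B5 :=
  flatten [seq flatten [seq flatten [seq flatten [seq [seq (a, b, c, d, e) | e <- bools]
    | d <- bools] | c <- bools] | b <- bools] | a <- bools].

Definition beq (a b : bool) : bool := if a then b else ~~ b.
Definition eqB (x y : B5) : bool :=
  let: (a, b, c, d, e) := x in let: (a', b', c', d', e') := y in
  if beq a a' then if beq b b' then if beq c c' then if beq d d' then beq e e'
  else false else false else false else false.
Definition memB (v : B5) (p : seq B5) : bool := has (eqB v) p.

Definition badj (x y : B5) : bool :=
  count (fun i => proj i x != proj i y) (iota 0 5) == 1.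

Definition overlap (a b c d : B5) : bool :=
  has (fun i => (proj i a != proj i b) && (proj i c != proj i d)) (iota 0 5).

Definition antichk (a b c d : B5) : bool :=
  if overlap a b c d then
    (if eqB c (bneg a) then eqB d (bneg b) else false) ||
    (if eqB c (bneg b) then eqB d (bneg a) else false)
  else true.

Definition okext (p : seq B5) (v : B5) : bool :=
  if (size p == 0) || badj (last bz p) v then
  if memB v p then false else
  if eqB v bz then false else if eqB v bo then false else
      all (fun j => antichk (nth bz p j) (nth bz p j.+1) (last bz p) v) (iota 0 (size p).-1)
  else false.

Definition ext (p : seq B5) : seq (seq B5) :=
  [seq rcons p v | v <- allB5 & okext p v].

Fixpoint L (n : nat) : seq (seq B5) :=
  match n with
  | 0 => [:: [::]]
  | n'.+1 => flatten [seq ext p | p <- L n']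
  end.

Definition mask (s : seq B5) : seq bool := [seq memB v s | v <- allB5].

Fixpoint eqbs (a b : seq bool) : bool :=
  match a, b with
  | [::], [::] => true
  | x :: a', y :: b' => if beq x y then eqbs a' b' else false
  | _, _ => false
  end.

Fixpoint disjm (a b : seq bool) : bool :=
  match a, b with
  | x :: a', y :: b' => if x && y then false else disjm a' b'
  | _, _ => true
  end.

Definition myundup (l : seq (seq bool)) : seq (seq bool) :=
  foldr (fun x acc => if has (eqbs x) acc then acc else x :: acc) [::] l.

Definition Sets := myundup (map mask (L 10)).

Definition final_check : bool :=
  all (fun A => all (fun B => if disjm A B then
         all (fun C => if disjm A C then ~~ disjm B C else true) Sets else true) Sets) Sets.

Lemma final_ok : final_check.
Proof. vm_compute. reflexivity. Qed.

Lemma eqbs_eq a b : eqbs a b = (a == b).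
Proof.
elim: a b => [|x a IH] [|y b] //=.
by rewrite IH; case: x; case: y.
Qed.

Lemma myundup_mem x l : x \in l -> exists2 y, y \in myundup l & y = x.
Proof.
elim: l => //= z l IH; rewrite in_cons => /orP[/eqP Ex|Hx].
  subst z; case E: (has _ _); last by exists x; rewrite ?mem_head.
  by move/hasP: E => [y Hy]; rewrite eqbs_eq => /eqP Ey; exists y.
have [y Hy Ey] := IH Hx.
by case: (has _ _) => //; exists y => //; rewrite in_cons Hy orbT.
Qed.

Definition toB (x : vert) : B5 :=
  (x (inord 0), x (inord 1), x (inord 2), x (inord 3), x (inord 4)).

Lemma projB i x : i < 5 -> proj i (toB x) = x (inord i).
Proof. by case: i => [|[|[|[|[|]]]]]. Qed.

Lemma toB_inj : injective toB.
Proof.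
move=> x y [E0 E1 E2 E3 E4]; apply/ffunP => i.
have -> : i = inord (val i) by apply/val_inj; rewrite /= inordK.
by case: i => [[|[|[|[|[|m]]]]] Hi] //=.
Qed.

Lemma toB_compl x : toB (compl x) = bneg (toB x).
Proof. by rewrite /toB /compl !ffunE. Qed.

Lemma toB0 : toB zero_v = bz.
Proof. by rewrite /toB /zero_v !ffunE. Qed.

Lemma toB1 : toB one_v = bo.
Proof. by rewrite /toB /one_v !ffunE. Qed.

Lemma enum5 : enum 'I_5 = [:: inord 0; inord 1; inord 2; inord 3; inord 4].
Proof. by apply: (inj_map val_inj); rewrite val_enum_ord /= !inordK. Qed.

Lemma adjB x y : adj x y = badj (toB x) (toB y).
Proof. by rewrite /adj cardsE cardE /enum_mem -enumT size_filter enum5 /= /badj.  Qed.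

Lemma eqB_eq x y : eqB x y = (x == y).
Proof.
case: x => [[[[a b] c] d] e]; case: y => [[[[a' b'] c'] d'] e'].
by case: a; case: b; case: c; case: d; case: e; case: a'; case: b'; case: c'; case: d'; case: e'.
Qed.

Lemma memB_in v p : memB v p = (v \in p).
Proof. by elim: p => //= x p IH; rewrite IH eqB_eq in_cons. Qed.

Lemma code_inj : injective code.
Proof.
move=> [[[[a b] c] d] e] [[[[a' b'] c'] d'] e'].
by case: a; case: b; case: c; case: d; case: e; case: a'; case: b'; case: c'; case: d'; case: e'.
Qed.

Lemma L_complete s :
  size s = 10 -> uniq s -> bz \notin s -> bo \notin s ->
  (forall k, k.+1 < 10 -> badj (nth bz s k) (nth bz s k.+1)) ->
  (forall j k, j.+1 < 10 -> k.+1 < 10 -> j != k ->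
     antichk (nth bz s j) (nth bz s j.+1) (nth bz s k) (nth bz s k.+1)) ->
  forall n, n <= 10 -> take n s \in L n.
Proof.
move=> Hs Hu Hz Ho Ha Hc; elim=> [|n IH] Hn; first by rewrite take0.
have Hn' : n < size s by rewrite Hs.
rewrite (take_nth bz Hn') /=; apply/flatten_mapP; exists (take n s).
  by apply: IH; apply: ltnW.
rewrite /ext; apply: map_f; rewrite mem_filter; apply/andP; split; last first.
  by case: (nth bz s n) => [[[[[] []] []] []] []].
set p := take n s; set v := nth bz s n.
have Hsz : size p = n by rewrite size_takel // ltnW.
have Hlast : 0 < n -> last bz p = nth bz s n.-1.
  by move=> H0; rewrite -nth_last Hsz nth_take // prednK.
have Hvs : v \in s by apply: mem_nth.
rewrite /okext.
have -> : (size p == 0) || badj (last bz p) v.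
  rewrite Hsz; case: (posnP n) => [//|H0]; rewrite orbC Hlast //.
  have := Ha n.-1; rewrite prednK // orbF => H; by apply: H.
have -> : memB v p = false.
  rewrite memB_in; apply/negP => Hvp.
  move: Hu; rewrite -(cat_take_drop n s) cat_uniq => /and3P[_ /hasP H _]; apply: H.
  by exists v => //; rewrite (drop_nth bz Hn') mem_head.
have -> : eqB v bz = false by rewrite eqB_eq; apply/negP => /eqP E; move: Hz; rewrite -E Hvs.
have -> : eqB v bo = false by rewrite eqB_eq; apply/negP => /eqP E; move: Ho; rewrite -E Hvs.
apply/allP => j; rewrite mem_iota add0n Hsz => Hj.
have H0 : 0 < n by move: Hj; case: (n).
move/andP: Hj => [_ Hj].
rewrite Hlast // !nth_take //; try lia.
have := Hc j n.-1; rewrite prednK // => H; apply: H; try lia.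
Qed.

Lemma cyc_adj c k : size c = 10 -> cycle adj c -> k.+1 < 10 ->
  adj (nth zero_v c k) (nth zero_v c k.+1).
Proof.
case: c => [|x p] //= [Hp]; rewrite rcons_path => /andP[/(pathP zero_v) H _] Hk.
by apply: H; rewrite Hp.
Qed.

Lemma cyc_to_B c : size c = 10 -> antipodal_cycle c -> avoids_01 c ->
  exists2 A, A \in Sets & A = mask (map toB c).
Proof.
move=> Hs [[_ [Hu Hc]] Ha] [H0 H1].
have Hnth k : k < 10 -> nth bz (map toB c) k = toB (nth zero_v c k).
  by move=> Hk; rewrite -toB0 (nth_map zero_v) // Hs.
have Hadj k : k.+1 < 10 -> badj (nth bz (map toB c) k) (nth bz (map toB c) k.+1).
  by move=> Hk; rewrite !Hnth ?(ltnW Hk) // -adjB; apply: cyc_adj.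
apply: myundup_mem; apply: map_f.
have <- : take 10 (map toB c) = map toB c by rewrite take_oversize // size_map Hs.
apply: L_complete => //.
- by rewrite size_map.
- by rewrite (map_inj_uniq toB_inj).
- by rewrite -toB0 (mem_map toB_inj).
- by rewrite -toB1 (mem_map toB_inj).
move=> j k Hj Hk Hjk; rewrite /antichk.
case E: (overlap _ _ _ _) => //; move/hasP: E => -[i]; rewrite mem_iota add0n => /andP[_ Hi] /andP[Di Dk].
rewrite !Hnth ?(ltnW Hj) ?(ltnW Hk) // in Di Dk *.
have Hdir m : m.+1 < 10 -> toB (nth zero_v c m) = toB (nth zero_v c m) -> 
   (proj i (toB (nth zero_v c m)) != proj i (toB (nth zero_v c m.+1))) ->
   has_dir (edge_src c m) (edge_tgt c m) (inord i).
  move=> Hm _ D; rewrite /has_dir /edge_src /edge_tgt Hs modn_small //.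
  by rewrite cyc_adj // -!projB.
have := Ha j k (inord i); rewrite /edge_src /edge_tgt Hs !modn_small // => Hant.
have D1 : has_dir (nth zero_v c j) (nth zero_v c j.+1) (inord i).
  by have := Hdir j Hj erefl Di; rewrite /edge_src /edge_tgt Hs modn_small.
have D2 : has_dir (nth zero_v c k) (nth zero_v c k.+1) (inord i).
  by have := Hdir k Hk erefl Dk; rewrite /edge_src /edge_tgt Hs modn_small.
have := Hant (ltnW Hj) (ltnW Hk) (elimN eqP Hjk) D1 D2.
by case=> [[-> ->]|[-> ->]]; rewrite !toB_compl !eqB_eq !eqxx ?orbT.
Qed.

Lemma disj_of c1 c2 : vdisjoint c1 c2 -> disjm (mask (map toB c1)) (mask (map toB c2)).
Proof.
move=> H; rewrite /mask; elim: allB5 => //= v l ->.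
rewrite !memB_in; case E: (v \in _) => //; case E2: (v \in _) => //.
move/mapP: E => [a Ha Ea]; move/mapP: E2 => [b Hb Eb].
by move: (H a Ha); rewrite (toB_inj (etrans (esym Ea) Eb)) Hb.
Qed.

Theorem proposition20 :
  ~ exists c1 c2 c3 : seq vert,
      [/\ size c1 = 10, size c2 = 10 & size c3 = 10] /\
      [/\ antipodal_cycle c1, antipodal_cycle c2 & antipodal_cycle c3] /\
      [/\ avoids_01 c1, avoids_01 c2 & avoids_01 c3] /\
      [/\ vdisjoint c1 c2, vdisjoint c1 c3 & vdisjoint c2 c3].
Proof.
move=> [c1 [c2 [c3 [[s1 s2 s3] [[a1 a2 a3] [[v1 v2 v3] [d12 d13 d23]]]]]]].
have [A1 HA1 E1] := cyc_to_B s1 a1 v1.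
have [A2 HA2 E2] := cyc_to_B s2 a2 v2.
have [A3 HA3 E3] := cyc_to_B s3 a3 v3.
have D12 := disj_of d12; have D13 := disj_of d13; have D23 := disj_of d23.
rewrite -E1 -E2 in D12; rewrite -E1 -E3 in D13; rewrite -E2 -E3 in D23.
have := final_ok; rewrite /final_check.
move/allP/(_ _ HA1)/allP/(_ _ HA2).
rewrite D12 => /allP/(_ _ HA3).
by rewrite D13 D23.
Qed.
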